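(* Let $n$ be one of the integers for which $\mathbb{Z}[\xi_n]$ has class number one, $\mathcal{M}_n=\mathbb{Z}[\xi_n]$, and $I$ a principal ideal of $\mathcal{M}_n$ of index $\ell$. With respect to the basis $\{1,\xi_n,\dots,\xi_n^{\varphi(n)-1}\}$, let $S$ be the $\varphi(n)\times\varphi(n)$ matrix whose columns generate the sublattice $L$ representing $I$, let $A$ and $B$ be the matrices representing $\phi_1$ and $\phi_2$ respectively, and let $x_1+L,\dots,x_\ell+L$ be the cosets of $L$ in $\Lambda$ (with $x_i$ integer coordinate vectors). For the Bravais coloring of $\mathcal{M}_n$ determined by $I$, with color symmetry group $H$ and color fixing group $K$: (i) $\phi_2\in K$ if and only if $\phi_2\in H$ and $S^{-1}(Bx_i-x_i)$ is an integral vector for all $i=1,\dots,\ell$; (ii) for $k$ dividing $N$, $\phi_1^k\in K$ if and only if $S^{-1}(A^kx_i-x_i)$ is an integral vector for all $i=1,\dots,\ell$.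
   Context: Standing assumption: $n\in\{3,4,5,7,8,9,11,12,13,15,16,17,19,20,21,24,25,27,28,32,33,35,36,40,44,45,48,60,84\}$ (the values for which $\mathcal{M}_n=\mathbb{Z}[\xi_n]$, $\xi_n=\exp(2\pi i/n)$, is a principal ideal domain). Let $\varphi$ be Euler's function and $N=n$ if $n$ is even, $N=2n$ if $n$ is odd. Using the $\mathbb{Z}$-basis $\{1,\xi_n,\dots,\xi_n^{\varphi(n)-1}\}$ of $\mathcal{M}_n$, each element is identified with its integer coordinate vector, so $\mathcal{M}_n$ becomes a lattice $\Lambda=\mathbb{Z}^{\varphi(n)}\subset\mathbb{R}^{\varphi(n)}$, and a principal ideal $I$ of index $\ell$ becomes a sublattice $L\subseteq\Lambda$ of index $\ell$. Let $\phi_1$ be the linear map induced by multiplication by $\exp(2\pi i/N)$ (an $N$-fold rotation) and $\phi_2$ the linear map induced by complex conjugation (a reflection); they generate a dihedral group $D_N$ of order $2N$. Let $T(G)=\{t_y: x\mapsto x+y \mid y\in\Lambda\}$; the symmetry group of $\Lambda$ is $G=T(G)\rtimes D_N$. The Bravais coloring determined by $I$ assigns to each element of $\Lambda$ one of $\ell$ colors, two elements getting the same color iff they lie in the same coset of $L$ in $\Lambda$. The color symmetry group $H$ is the set of $g\in G$ such that for every coset $x+L$ the image $g(x+L)$ is again a coset of $L$; the color fixing group $K$ is the set of $g\in H$ with $g(x+L)=x+L$ for all $x\in\Lambda$. *)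

(* Defs.v *)
From mathcomp Require Import all_boot all_algebra.
From mathcomp Require Import reals trigo.
From mathcomp Require Import complex.
Set Implicit Arguments.
Unset Strict Implicit.
Import GRing.Theory Num.Theory.
Local Open Scope ring_scope.
Local Open Scope complex_scope.

Definition class_number_one_n : seq nat :=
  [:: 3; 4; 5; 7; 8; 9; 11; 12; 13; 15; 16; 17; 19; 20; 21; 24; 25; 27; 28;
      32; 33; 35; 36; 40; 44; 45; 48; 60; 84]%N.

Definition NN (n : nat) : nat := if odd n then (2 * n)%N else n.

Definition rootU (R : realType) (m : nat) : R[i] :=
  cos (2 * pi / m%:R) +i* sin (2 * pi / m%:R).

(* The lattice Lambda = Z^phi(n): integer coordinate (column) vectors
   with respect to the basis 1, xi_n, ..., xi_n^(phi(n)-1). *)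
Notation lat n := 'cV[int]_(totient n).
Notation latmx n := 'M[int]_(totient n).

Definition emb (R : realType) (n : nat) (v : lat n) : R[i] :=
  \sum_(j < totient n) (v j 0)%:~R * rootU R n ^+ j.

(* The sublattice L representing the principal ideal I = alpha M_n,
   where alpha has coordinate vector a. *)
Definition inL (R : realType) (n : nat) (a : lat n) (v : lat n) : Prop :=
  exists w : lat n, emb R v = emb R a * emb R w.

(* Elements of the symmetry group G = T(G) x| D_N, D_N = <phi_1, phi_2>,
   with phi_1, phi_2 given by the integer matrices A, B:
   the maps x |-> A^a B^b x + y. *)
Definition inG (n : nat) (A B : latmx n) (g : lat n -> lat n) : Prop :=
  exists (a b : nat) (y : lat n), forall x, g x = A ^+ a *m (B ^+ b *m x) + y.

(* g(x + L) = y + L as sets, for the sublattice (given as a predicate) L. *)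
Definition maps_coset (n : nat) (L : lat n -> Prop) (g : lat n -> lat n)
  (x y : lat n) : Prop :=
  forall w, L (w - y) <-> exists z, L (z - x) /\ g z = w.

Definition inH (n : nat) (A B : latmx n) (L : lat n -> Prop)
  (g : lat n -> lat n) : Prop :=
  inG A B g /\ forall x, exists y, maps_coset L g x y.

Definition inK (n : nat) (A B : latmx n) (L : lat n -> Prop)
  (g : lat n -> lat n) : Prop :=
  inH A B L g /\ forall x, maps_coset L g x x.

Definition ratmx (m p : nat) (M : 'M[int]_(m, p)) : 'M[rat]_(m, p) :=
  map_mx (fun z : int => z%:~R) M.

Definition integral_vec (m : nat) (v : 'cV[rat]_m) : Prop :=
  forall i, v i 0 \is a Num.int.

(* Main.v *)
Require Import Defs.
From mathcomp Require Import all_boot all_algebra.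
From mathcomp Require Import reals trigo.
From mathcomp Require Import complex.
From mathcomp Require Import order algC cyclotomic.
From Stdlib Require Import IndefiniteDescription.
Import Order.TTheory GRing.Theory Num.Theory.
Local Open Scope ring_scope.
Local Open Scope complex_scope.

Section Trig.
Variable R : realType.

Lemma rootU_exp (m k : nat) :
  rootU R m ^+ k = cos (k%:R * (2 * pi / m%:R)) +i* sin (k%:R * (2 * pi / m%:R)).
Proof.
elim: k => [|k IH]; first by rewrite expr0 !mul0r cos0 sin0.
rewrite exprSr IH /rootU; set t := (_ * pi / _). rewrite -[k.+1]addn1 natrD mulrDl mul1r cosD sinD. by rewrite {1}/GRing.mul /= [X in _ +i* X]addrC.
Qed.

Lemma cos_neq1 (x : R) : 0 < x < pi *+ 2 -> cos x != 1.
Proof.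
case/andP=> x0 x2.
have key : forall y : R, 0 < y <= pi -> cos y != 1.
  move=> y /andP[y0 ypi]; rewrite -cos0 lt_eqF //.
  rewrite ltr_cos // in_itv /= ?lexx ?pi_ge0 ?(ltW y0) //.
have [xpi|pix] := leP x pi; first by apply: key; rewrite x0.
have -> : cos x = cos (pi *+ 2 - x) by rewrite cosB cos2pi sin2pi mul1r mul0r addr0.
apply: key; rewrite subr_gt0 x2 /= lerBlDr -lerBlDl.
by rewrite mulr2n addrK ltW.
Qed.

Lemma rootU_m (m : nat) : (0 < m)%N -> rootU R m ^+ m = 1.
Proof.
move=> m0; rewrite rootU_exp mulrCA mulfV ?pnatr_eq0 -?lt0n // mulr1.
by rewrite mulr_natl cos2pi sin2pi.
Qed.

Lemma prim_rootU (m : nat) : (0 < m)%N -> m.-primitive_root (rootU R m).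
Proof.
move=> m0; have [d pd dm] := prim_order_exists m0 (rootU_m m m0).
have d0 := prim_order_gt0 pd.
have [ltdm|] := ltnP d m; last first.
  move=> md. have dme : d = m by apply/eqP; rewrite eqn_leq md (dvdn_leq m0 dm). by move: pd; rewrite dme.
have := prim_expr_order pd; rewrite rootU_exp => -[/eqP].
move=> /eqP c1 _; exfalso; move: c1; apply/eqP; apply: cos_neq1.
have mR : 0 < m%:R :> R by rewrite ltr0n.
apply/andP; split.
  by rewrite mulr_gt0 ?ltr0n // divr_gt0 // mulr_gt0 ?pi_gt0.
rewrite mulrCA -[pi *+ 2]mulr_natl -[X in _ < X]mulr1 ltr_pM2l ?mulr_gt0 ?pi_gt0 //.
by rewrite ltr_pdivrMr // mul1r ltr_nat.
Qed.

End Trig.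

Lemma Phi_dvd n (d : {poly rat}) : (0 < n)%N ->
  d %| map_poly intr 'Phi_n -> (1 < size d)%N -> map_poly intr 'Phi_n %| d.
Proof.
move=> n0 dd sd.
have [z pz] := C_prim_root_exists n0.
have Dz := Cintr_Cyclotomic pz.
have eZQC : map_poly (ratr : rat -> algC) (map_poly intr 'Phi_n) = map_poly intr 'Phi_n.
  rewrite -map_poly_comp; apply: eq_map_poly => b; by rewrite /= rmorph_int.
have : size (map_poly (ratr : rat -> algC) d) != 1%N.
  by rewrite size_map_poly gtn_eqF.
case/closed_rootP => w rw.
have pw : n.-primitive_root w.
  have : root (map_poly (intr : int -> algC) 'Phi_n) w.
    rewrite -eZQC; have := dvdp_map (ratr : {rmorphism rat -> algC}) d (map_poly intr 'Phi_n).
    rewrite dd => /dvdpP[q ->]; by rewrite rootM rw orbT.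
  by rewrite Dz root_cyclotomic.
have [p [Dp _] Hp] := minCpolyP w.
have : map_poly (ratr : rat -> algC) p = map_poly ratr (map_poly intr 'Phi_n).
  by rewrite -Dp eZQC (minCpoly_cyclotomic pw) (Cintr_Cyclotomic pw).
move/map_inj_poly => /(_ (fmorph_inj _) (rmorph0 _)) <-.
by rewrite -Hp.
Qed.

Lemma Phi_root (F : fieldType) n (z : F) :
  n.-primitive_root z -> root (map_poly intr 'Phi_n) z.
Proof.
move=> pz; have n0 := prim_order_gt0 pz.
have rootprod m : (0 < m)%N ->
    root (map_poly (intr : int -> F) (\prod_(d <- divisors m) 'Phi_d)) z = (z ^+ m == 1).
  by move=> m0; rewrite prod_Cyclotomic // rmorphB rmorph1 rmorphXn /= map_polyX /root !hornerE subr_eq0.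
have := rootprod n n0; rewrite prim_expr_order // eqxx rmorph_prod.
rewrite -(big_map (fun d => map_poly (intr : int -> F) 'Phi_d) predT id) => H.
have : ~~ all (fun p => ~~ root p z) [seq map_poly (intr : int -> F) 'Phi_d | d <- divisors n].
  by rewrite -root_bigmul H.
rewrite all_map => /allPn [d]; rewrite -dvdn_divisors // => dn /negPn rd.
have [edn|ndn] := eqVneq d n; first by rewrite -edn.
have d0 : (0 < d)%N by apply: dvdn_gt0 dn.
have : root (map_poly (intr : int -> F) (\prod_(e <- divisors d) 'Phi_e)) z.
  rewrite rmorph_prod (big_rem d); last by rewrite -dvdn_divisors.
  by apply/rootP; rewrite hornerM (rootP rd) mul0r.
rewrite rootprod // -(prim_order_dvd pz) => nd.
by case/eqP: ndn; apply/eqP; rewrite eqn_leq (dvdn_leq d0 nd) (dvdn_leq n0 dn).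
Qed.


Lemma emb_eq0 (R : realType) n (v : lat n) : (0 < n)%N -> emb R v = 0 -> v = 0.
Proof.
move=> n0 ev.
pose c (j : nat) : rat := \sum_(k < totient n | val k == j) (v k 0)%:~R.
have cE (k : 'I_(totient n)) : c k = (v k 0)%:~R.
  by rewrite /c (big_pred1 k) // => k'; rewrite /= val_eqE.
pose p : {poly rat} := \poly_(j < totient n) c j.
have pz := @prim_rootU R n n0.
have ep : (map_poly (ratr : rat -> R[i]) p).[rootU R n] = emb R v.
  rewrite (@horner_coef_wide _ (totient n)); last by rewrite size_map_poly size_poly.
  rewrite /emb; apply: eq_bigr => j _.
  by rewrite coef_map /= coef_poly ltn_ord cE ratr_int.
have p0 : p = 0.
  apply/eqP; apply/negPn/negP => pn0.
  set Phi := map_poly (intr : int -> rat) 'Phi_n.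
  set g := gcdp Phi p.
  have eP : map_poly (ratr : rat -> R[i]) Phi = map_poly intr 'Phi_n.
    rewrite -map_poly_comp; apply: eq_map_poly => b; by rewrite /= rmorph_int.
  have rg : root (map_poly (ratr : rat -> R[i]) g) (rootU R n).
    rewrite gcdp_map root_gcd; apply/andP; split.
      by rewrite eP; apply: Phi_root.
    by rewrite /root ep ev.
  have gn0 : g != 0 by rewrite gcdp_eq0 negb_and pn0 orbT.
  have sg : (1 < size g)%N.
    by rewrite -(size_map_poly (ratr : {rmorphism rat -> R[i]})) (root_size_gt1 _ rg) // map_poly_eq0.
  have := @Phi_dvd n g n0 (dvdp_gcdl Phi p) sg => /dvdp_trans /(_ (dvdp_gcdr Phi p)) /(dvdp_leq pn0).
  rewrite /Phi size_map_inj_poly ?size_Cyclotomic //; last exact: intr_inj.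
  by rewrite ltnNge size_poly.
apply/matrixP => i j; rewrite (ord1 j) mxE.
have := congr1 (fun q : {poly rat} => q`_i) p0.
by rewrite coef_poly ltn_ord cE coef0 => /eqP; rewrite intr_eq0 => /eqP.
Qed.

Lemma ratmxM m p r (M : 'M[int]_(m,p)) (N : 'M[int]_(p,r)) :
  ratmx (M *m N) = ratmx M *m ratmx N.
Proof. by rewrite /ratmx map_mxM. Qed.

Lemma ratmxB m p (M N : 'M[int]_(m,p)) : ratmx (M - N) = ratmx M - ratmx N.
Proof. by rewrite /ratmx map_mxB. Qed.

Lemma ratmx_inj m p : injective (@ratmx m p).
Proof.
move=> M N e; apply/matrixP => i j.
by have := congr1 (fun P : 'M[rat]_(m,p) => P i j) e; rewrite !mxE => /intr_inj.
Qed.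

Theorem theorem3p2p2 (R : realType) (n : nat)
  (hn : n \in class_number_one_n)
  (a : lat n)
  (S : latmx n)
  (hS : forall v : lat n, inL R a v <-> exists w : lat n, v = S *m w)
  (A B : latmx n)
  (hA : forall v : lat n, emb R (A *m v) = rootU R (NN n) * emb R v)
  (hB : forall v : lat n, emb R (B *m v) = (emb R v)^*)
  (ell : nat) (x : 'I_ell -> lat n)
  (hcover : forall v : lat n, exists i, inL R a (v - x i))
  (hdistinct : forall i j, inL R a (x i - x j) -> i = j) :
  (inK A B (inL R a) (fun v => B *m v) <->
     inH A B (inL R a) (fun v => B *m v) /\
     forall i, integral_vec (invmx (ratmx S) *m ratmx (B *m x i - x i)))
  /\
  (forall k : nat, (k %| NN n)%N ->
     (inK A B (inL R a) (fun v => A ^+ k *m v) <->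
        forall i, integral_vec (invmx (ratmx S) *m ratmx (A ^+ k *m x i - x i)))).
Proof.
have n0 : (0 < n)%N by move: hn; apply: contraTT; rewrite -eqn0Ngt => /eqP ->.
have L0 : inL R a 0 by apply/hS; exists 0; rewrite mulmx0.
have LD u v : inL R a u -> inL R a v -> inL R a (u + v).
  by move=> /hS[w1 ->] /hS[w2 ->]; apply/hS; exists (w1 + w2); rewrite mulmxDr.
have LN v : inL R a v -> inL R a (- v).
  by move=> /hS[w ->]; apply/hS; exists (- w); rewrite mulmxN.
have Ltr p q r : inL R a (p - q) -> inL R a (q - r) -> inL R a (p - r).
  by move=> h1 h2; have := LD _ _ h1 h2; rewrite addrA subrK.
have Lsym p q : inL R a (p - q) -> inL R a (q - p).
  by move=> h; have := LN _ h; rewrite opprB.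
have LA v : inL R a v -> inL R a (A *m v).
  by case=> w ew; exists (A *m w); rewrite !hA ew mulrCA.
have LAk k (v : lat n) : inL R a v -> inL R a (A ^+ k *m v).
  elim: k => [|k IH] Lv; first by rewrite expr0 mul1mx.
  by rewrite exprS -mulmxA; apply: LA; apply: IH.
have embB (u v : lat n) : emb R (u - v) = emb R u - emb R v.
  by rewrite /emb -sumrB; apply: eq_bigr => j _; rewrite !mxE intrB mulrBl.
have embAk k (v : lat n) : emb R (A ^+ k *m v) = rootU R (NN n) ^+ k * emb R v.
  elim: k => [|k IH]; first by rewrite expr0 mul1mx expr0 mul1r.
  by rewrite exprS -mulmxA hA IH exprS mulrA.
have N0 : (0 < NN n)%N by rewrite /NN; case: odd => //; rewrite muln_gt0.
have AN (v : lat n) : A ^+ (NN n) *m v = v.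
  apply/eqP; rewrite -subr_eq0; apply/eqP; apply: (@emb_eq0 R n _ n0).
  by rewrite embB embAk (@rootU_m R _ N0) mul1r subrr.
have Sunit : ratmx S \in unitmx.
  case: (boolP (ratmx S \in unitmx)) => // nS; exfalso.
  have /det0P[u u0 uS] : \det (ratmx S) == 0 by move: nS; rewrite unitmxE unitfE negbK.
  have key v : inL R a v -> u *m ratmx v = 0.
    by case/hS => w ->; rewrite ratmxM mulmxA uS mul0mx.
  have /existsP[j uj] : [exists j, u 0 j != 0].
    apply: contraNT u0 => /existsPn H; apply/eqP/matrixP => i k.
    by rewrite (ord1 i) mxE; apply/eqP/negPn/H.
  pose vt (t : nat) : lat n := \col_k (if k == j then t%:Z else 0).
  have lin t : (u *m ratmx (vt t)) 0 0 = u 0 j * t%:R.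
    rewrite !mxE (bigD1 j) //= big1 => [|k kj]; first by rewrite !mxE eqxx addr0.
    by rewrite !mxE (negbTE kj) mulr0.
  have pick (t : nat) : {i : 'I_ell | inL R a (vt t - x i)}.
    by apply: constructive_indefinite_description; exact: hcover.
  pose f (t : 'I_ell.+1) := sval (pick t).
  have finj : injective f.
    move=> t1 t2 e; have h1 := svalP (pick t1); have h2 := svalP (pick t2).
    rewrite -/(f t1) -/(f t2) e in h1 h2.
    have := key _ (Ltr _ _ _ h1 (Lsym _ _ h2)).
    rewrite ratmxB mulmxBr => /eqP; rewrite subr_eq0 => /eqP /(congr1 (fun M : 'M[rat]_(1,1) => M 0 0)).
    rewrite !lin => /(mulfI uj) /eqP; rewrite eqr_nat => /eqP; exact: val_inj.
  by have := leq_card f finj; rewrite !card_ord ltnn.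
have intL y : integral_vec (invmx (ratmx S) *m ratmx y) <-> inL R a y.
  split; last first.
    by case/hS => w ->; rewrite ratmxM mulKmx // => i; rewrite mxE intr_int.
  set q := invmx (ratmx S) *m ratmx y => Iq; apply/hS.
  exists (map_mx (fun r : rat => Num.floor r) q).
  have e : ratmx (map_mx (fun r : rat => Num.floor r) q) = q.
    apply/matrixP => i j; rewrite !mxE (ord1 j) floorK //; by have := Iq i; rewrite /q mxE.
  by apply: ratmx_inj; rewrite ratmxM e /q mulKVmx.
split.
  split.
    case=> Hh Hfix; split => // i; apply/intL.
    apply: (Hfix (x i) (B *m x i)).2; exists (x i); split => //; by rewrite subrr.
  case=> Hh Hint; split => //; have [HG Hco] := Hh.
  have LBx v : inL R a (B *m v - v).
    have [i Li] := hcover v; have [y Hy] := Hco (x i).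
    have h1 : inL R a (B *m v - y) by apply: (Hy _).2; exists v.
    have h2 : inL R a (B *m x i - y) by apply: (Hy _).2; exists (x i); rewrite subrr.
    have h3 := (intL _).1 (Hint i).
    apply: (Ltr _ _ _ h1); apply: (Ltr _ _ _ (Lsym _ _ h2)).
    by apply: (Ltr _ _ _ h3); apply: Lsym.
  move=> v; have [y Hy] := Hco v.
  have h1 : inL R a (B *m v - y) by apply: (Hy _).2; exists v; rewrite subrr.
  have hyv : inL R a (y - v) by apply: Ltr (Lsym _ _ h1) (LBx v).
  move=> w; split.
    by move=> Lwv; apply: (Hy w).1; apply: Ltr Lwv (Lsym _ _ hyv).
  by move=> /(Hy w).2 Lwy; apply: Ltr Lwy hyv.
move=> k kN; have kle := dvdn_leq N0 kN.
split.
  case=> _ Hfix i; apply/intL.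
  apply: (Hfix (x i) (A ^+ k *m x i)).2; exists (x i); split => //; by rewrite subrr.
move=> Hint.
have LAx v : inL R a (A ^+ k *m v - v).
  have [i Li] := hcover v.
  have h1 : inL R a (A ^+ k *m v - A ^+ k *m x i) by rewrite -mulmxBr; apply: LAk.
  apply: (Ltr _ _ _ h1); apply: (Ltr _ _ _ ((intL _).1 (Hint i))).
  exact: Lsym.
have exD i j : A ^+ i *m A ^+ j = A ^+ (i + j) by rewrite exprD.
have Hmc v : maps_coset (inL R a) (fun v => A ^+ k *m v) v v.
  move=> w; split.
    move=> Lwv; exists (A ^+ (NN n - k) *m w); split; last first.
      by rewrite mulmxA exD subnKC // AN.
    have h : inL R a (w - A ^+ k *m v) by apply: Ltr Lwv (Lsym _ _ (LAx v)).
    have := LAk (NN n - k)%N _ h.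
    by rewrite mulmxBr mulmxA exD subnK // AN.
  case=> z [Lzv <-].
  have h1 : inL R a (A ^+ k *m z - A ^+ k *m v) by rewrite -mulmxBr; apply: LAk.
  exact: Ltr h1 (LAx v).
split; last exact: Hmc.
split; last by move=> v; exists v; exact: Hmc.
by exists k, 0%N, 0 => v; rewrite expr0 mul1mx addr0.
Qed.
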